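(* Let $G$ be a finite group, $X\subseteq G$ a conjugacy class, and $V=\Bbbk X$ a Yetter–Drinfeld module over $\Bbbk G$ with basis $\{v_x\}_{x\in X}$, $v_x$ homogeneous of $G$-degree $x$, and $g\cdot v_y\in\Bbbk^\times v_{gyg^{-1}}$; let $q\colon X\times X\to\Bbbk^\times$ be the corresponding cocycle, defined by $x\cdot v_y=q(x,y)v_{x\triangleright y}$, so that the braiding is $c_q(v_x\otimes v_y)=q(x,y)\,v_{x\triangleright y}\otimes v_x$. Let $q'$ be a cocycle on $X$ twist-equivalent to $q$, and let $\mathcal B(X,q)$, $\mathcal B(X,q')$ be the Nichols algebras of $(\Bbbk X,c_q)$ and $(\Bbbk X,c_{q'})$. Then for every $d\in\mathbb N$ (with $d\ge2$), $\mathcal B(X,q)\cong\widehat{\mathcal B(X,q)}_d$ if and only if $\mathcal B(X,q')\cong\widehat{\mathcal B(X,q')}_d$, where the isomorphisms are the natural projections.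
   Context: A rack $(X,\triangleright)$ is a nonempty set with a binary operation such that each $x\triangleright-$ is bijective and $x\triangleright(y\triangleright z)=(x\triangleright y)\triangleright(x\triangleright z)$; here $x\triangleright y=xyx^{-1}$ in $G$. A $2$-cocycle of degree $1$ on $X$ is $q\colon X\times X\to\Bbbk^\times$ with $q(x,y\triangleright z)q(y,z)=q(x\triangleright y,x\triangleright z)q(x,z)$. Two such cocycles $q,q'$ on $X\subseteq G$ are twist-equivalent if there is a group $2$-cocycle $\sigma\colon G\times G\to\Bbbk^\times$ (i.e. $\sigma(x,y)\sigma(xy,z)=\sigma(y,z)\sigma(x,yz)$, $\sigma(x,1)=\sigma(1,x)=1$) with $q'(x,y)=\sigma(x,y)q(x,y)\sigma(x\triangleright y,x)^{-1}$ for all $x,y\in X$. For a vector space $V$ with a solution $c$ of the braid equation, $B_n$ (braid group with generators $\sigma_1,\dots,\sigma_{n-1}$) acts on $V^{\otimes n}$ by $\rho_n(\sigma_i)=\mathrm{id}^{\otimes(i-1)}\otimes c\otimes\mathrm{id}^{\otimes(n-i-1)}$; the Matsumoto section $M_n\colon\mathbb S_n\to B_n$ sends a reduced expression $s_{i_1}\cdots s_{i_l}$ to $\sigma_{i_1}\cdots\sigma_{i_l}$; the quantum symmetrizer is $Q_n=\sum_{w\in\mathbb S_n}\rho_n(M_n(w))$. The Nichols algebra is $\mathcal B(V,c)=T(V)/\bigoplus_{n\ge2}\ker Q_n$ (a connected bialgebra with $V$ primitive). For a connected bialgebra $B=T(B_1)/J$ generated in degree $1$ ($J$ a graded ideal and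 coideal in degrees $\ge2$), the $d$-atic cover is $\widehat B_d=T(B_1)/\big(\bigoplus_{m=2}^d(J\cap B_1^{\otimes m})\big)$ (quotient by the generated ideal); for $B=\mathcal B(V,c)$, $J\cap V^{\otimes m}=\ker Q_m$. *)

(* Defs.v *)
From HB Require Import structures.
From mathcomp Require Import all_boot all_order all_algebra all_fingroup.
Set Implicit Arguments. Unset Strict Implicit. Unset Printing Implicit Defensive.
Import GRing.Theory.
Local Open Scope ring_scope.

Section Nichols.
Variables (gT : finGroupType) (k : fieldType).

Definition rtr (x y : gT) : gT := (x * y * x^-1)%g.

Definition rack_cocycle (X : {set gT}) (q : gT -> gT -> k) : Prop :=
  (forall x y, x \in X -> y \in X -> q x y != 0) /\
  (forall x y z, x \in X -> y \in X -> z \in X ->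
     q x (rtr y z) * q y z = q (rtr x y) (rtr x z) * q x z).

(* q comes from a Yetter-Drinfeld module kX over kG with basis v_x of degree x
   and g . v_y = act g y v_{g y g^-1}, act g y <> 0; q(x,y) = act x y. *)
Definition YD_cocycle (X : {set gT}) (q : gT -> gT -> k) : Prop :=
  exists act : gT -> gT -> k,
    [/\ forall g y, y \in X -> act g y != 0,
        forall y, y \in X -> act 1%g y = 1,
        forall g h y, y \in X -> act (g * h)%g y = act g (rtr h y) * act h y
      & forall x y, x \in X -> y \in X -> q x y = act x y].

Definition group_2cocycle (s : gT -> gT -> k) : Prop :=
  [/\ forall x y, s x y != 0,
      forall x y z, s x y * s (x * y)%g z = s y z * s x (y * z)%g
    & forall x, s x 1%g = 1 /\ s 1%g x = 1].

Definition twist_equiv (X : {set gT}) (q q' : gT -> gT -> k) : Prop :=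
  exists s : gT -> gT -> k, group_2cocycle s /\
    forall x y, x \in X -> y \in X ->
      q' x y = s x y * q x y / s (rtr x y) x.

(* Tensor powers: an element of V^{(x)n} (V = kX) is a function on words,
   supported on words of length n with letters in X. *)
Definition inX (X : {set gT}) (w : seq gT) : bool := all (fun x => x \in X) w.

Definition homog (X : {set gT}) (n : nat) (f : seq gT -> k) : Prop :=
  forall w, f w != 0 -> (size w == n) && inX X w.

(* rho(sigma_i) = id^{(i)} (x) c_q (x) id : acts on positions i, i+1 (0-based).
   c_q(v_x (x) v_y) = q(x,y) v_{x|>y} (x) v_x, hence the coefficient of the
   word (..,a,b,..) in c_q f is q(b, b^-1 a b) f(.., b, b^-1 a b, ..). *)
Definition sigma (q : gT -> gT -> k) (i : nat) (f : seq gT -> k) : seq gT -> k :=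
  fun u => if (i.+1 < size u)%N then
             let a := nth 1%g u i in let b := nth 1%g u i.+1 in
             let y := (b^-1 * a * b)%g in
             q b y * f (set_nth 1%g (set_nth 1%g u i b) i.+1 y)
           else f u.

Definition adj (n i : nat) : 'S_n :=
  match insub i, insub i.+1 with
  | Some a, Some b => tperm a b
  | _, _ => 1%g
  end.

Definition prod_adj (n : nat) (t : seq nat) : 'S_n :=
  foldr (fun j acc => (adj n j * acc)%g) 1%g t.

Definition perm_length (n : nat) (w : 'S_n) : nat :=
  #|[set p : 'I_n * 'I_n | (p.1 < p.2)%N && (w p.2 < w p.1)%N]|.

(* rho_n(M_n(w)), M_n the Matsumoto section, computed on a (chosen) reduced
   expression of w *)
Definition rhoM (q : gT -> gT -> k) (n : nat) (w : 'S_n) (f : seq gT -> k)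
  : seq gT -> k :=
  match [pick t : (perm_length w).-tuple 'I_n.-1 |
          prod_adj n (map (@nat_of_ord _) t) == w] with
  | Some t => foldr (fun j g => sigma q (nat_of_ord j) g) f t
  | None => f
  end.

Definition Qn (q : gT -> gT -> k) (n : nat) (f : seq gT -> k) : seq gT -> k :=
  fun u => \sum_(w : 'S_n) rhoM q w f u.

(* degree n component of J = (+)_{n>=2} ker Q_n *)
Definition J_comp (q : gT -> gT -> k) (n : nat) (f : seq gT -> k) : Prop :=
  if (n < 2)%N then forall w, f w = 0 else forall w, Qn q n f w = 0.

(* e_u (x) g (x) e_v for g homogeneous of degree m *)
Definition tens (u : seq gT) (m : nat) (g : seq gT -> k) (v : seq gT)
  : seq gT -> k :=
  fun w => if [&& size w == (size u + m + size v)%N, take (size u) w == u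
                & drop (size u + m) w == v]
           then g (take m (drop (size u) w)) else 0.

(* the two-sided ideal of T(V) generated by (+)_{m=2}^d ker Q_m *)
Inductive ideal_d (X : {set gT}) (q : gT -> gT -> k) (d : nat)
  : (seq gT -> k) -> Prop :=
| idl_zero : ideal_d X q d (fun _ => 0)
| idl_add f g : ideal_d X q d f -> ideal_d X q d g ->
                ideal_d X q d (fun w => f w + g w)
| idl_ext f g : ideal_d X q d f -> (forall w, f w = g w) -> ideal_d X q d g
| idl_gen u m g v : (2 <= m <= d)%N -> inX X u -> inX X v -> homog X m g ->
                    (forall w, Qn q m g w = 0) ->
                    ideal_d X q d (tens u m g v).

(* B(X,q) = \hat B(X,q)_d via the natural projection, i.e. the ideal generated
   by the components of J of degree 2..d equals J (degreewise). *)
Definition nichols_dgen (X : {set gT}) (q : gT -> gT -> k) (d : nat) : Prop :=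
  forall n (f : seq gT -> k), homog X n f -> (J_comp q n f <-> ideal_d X q d f).

End Nichols.

(* Main.v *)
Require Import Defs.
From HB Require Import structures.
From mathcomp Require Import all_boot all_order all_algebra all_fingroup.
From mathcomp Require Import ring.
Set Implicit Arguments. Unset Strict Implicit. Unset Printing Implicit Defensive.

Section Twist.
Import GRing.Theory.
Local Open Scope ring_scope.
Variables (gT : finGroupType) (k : fieldType) (X : {set gT}).
Implicit Types (q : gT -> gT -> k) (f g : seq gT -> k) (u w : seq gT).

Definition prodw (w : seq gT) : gT := foldr (fun x acc => x * acc)%g 1%g w.
Fixpoint phiA (s : gT -> gT -> k) (a : gT) (w : seq gT) : k :=
  match w with [::] => 1 | x :: w' => s a x * phiA s (a * x)%g w' end.
Definition phi s w := phiA s 1%g w.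
Definition suppX (f : seq gT -> k) := forall w, f w != 0 -> inX X w.

Lemma split2 (u : seq gT) i : (i.+1 < size u)%N ->
  exists pre a b post, size pre = i /\ u = pre ++ a :: b :: post.
Proof.
elim: u i => [|x u IH] [|i] //=.
- case: u IH => [|y u'] //= _ _. by exists [::], x, y, u'.
- move=> H. have [pre [a [b [post [Hs ->]]]]] := IH i H.
  by exists (x::pre), a, b, post; rewrite /= Hs.
Qed.

Lemma sigmaE q i f pre (a b : gT) post : size pre = i ->
  sigma q i f (pre ++ a :: b :: post) =
  q b (b^-1 * a * b)%g * f (pre ++ b :: (b^-1 * a * b)%g :: post).
Proof.
move=> Hs; rewrite /sigma size_cat /= -Hs.
have -> : ((size pre).+1 < size pre + (size post).+2)%N by rewrite addnS addnS ltnS ltnS leq_addr.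
congr (_ * _); first by elim: pre {Hs} => //.
by congr f; elim: pre {Hs} => //= x pre ->.
Qed.

Lemma sigma_out q i f u : ~~ (i.+1 < size u)%N -> sigma q i f u = f u.
Proof. by move=> H; rewrite /sigma (negbTE H). Qed.

Lemma sigma_ext q i f g : f =1 g -> sigma q i f =1 sigma q i g.
Proof. by move=> H u; rewrite /sigma !H. Qed.

Lemma prodw_cat u w : prodw (u ++ w) = (prodw u * prodw w)%g.
Proof. by elim: u => [|x u IH] /=; rewrite ?mul1g // IH mulgA. Qed.

Lemma bya (a b : gT) : (b * (b^-1 * a * b) = a * b)%g.
Proof. by rewrite !mulgA mulgV mul1g. Qed.

Lemma rtr_bya (a b : gT) : rtr b (b^-1 * a * b)%g = a.
Proof. by rewrite /rtr bya mulgK. Qed.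

Lemma prodw_swap pre (a b : gT) post :
  prodw (pre ++ b :: (b^-1 * a * b)%g :: post) = prodw (pre ++ a :: b :: post).
Proof. by rewrite !prodw_cat /=; congr (_ * _)%g; rewrite mulgA bya mulgA. Qed.

Lemma sigma_mulG q i f (F : gT -> k) u :
  sigma q i (fun w => F (prodw w) * f w) u = F (prodw u) * sigma q i f u.
Proof.
case: (ltnP i.+1 (size u)) => H.
  have [pre [a [b [post [Hs ->]]]]] := split2 H.
  by rewrite !sigmaE // prodw_swap mulrCA.
by rewrite !sigma_out // -leqNgt.
Qed.

Hypothesis HX : forall b y, y \in X -> rtr b y \in X.

Lemma sigma_supp q i f : suppX f -> suppX (sigma q i f).
Proof.
move=> Hf u; case: (ltnP i.+1 (size u)) => H; last by rewrite sigma_out -?leqNgt //; apply: Hf.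
have [pre [a [b [post [Hs ->]]]]] := split2 H.
rewrite sigmaE // => Hnz.
have: f (pre ++ b :: (b^-1 * a * b)%g :: post) != 0.
  by apply: contraNneq Hnz => ->; rewrite mulr0.
move/Hf; rewrite /inX !all_cat /= => /andP [-> /and3P [Hb Hy ->]].
by rewrite Hb andbT -{1}(rtr_bya a b) HX.
Qed.

Variable s : gT -> gT -> k.
Hypothesis Hs : group_2cocycle s.

Lemma s_nz x y : s x y != 0. Proof. by case: Hs. Qed.
Lemma s_co x y z : s x y * s (x * y)%g z = s y z * s x (y * z)%g.
Proof. by case: Hs. Qed.
Lemma s_1 x : s x 1%g = 1. Proof. by case: Hs => _ _ /(_ x) []. Qed.

Lemma phiA_nz a w : phiA s a w != 0.
Proof. by elim: w a => [|x w IH] a /=; rewrite ?oner_neq0 // mulf_neq0 ?s_nz. Qed.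
Lemma phi_nz w : phi s w != 0. Proof. exact: phiA_nz. Qed.

Lemma phiA_cat a u w : phiA s a (u ++ w) = phiA s a u * phiA s (a * prodw u)%g w.
Proof.
elim: u a => [|x u IH] a /=; first by rewrite mulg1 mul1r.
by rewrite IH mulrA mulgA.
Qed.

Lemma phiA_tele a b w : s a b * phiA s (a * b)%g w = phiA s b w * s a (b * prodw w)%g.
Proof.
elim: w b => [|x w IH] b /=; first by rewrite mulg1 mul1r mulr1.
rewrite mulrA s_co -mulrA -mulgA IH mulrA mulgA.
by rewrite -mulgA.
Qed.

Lemma phiA_phi a w : phiA s a w = phi s w * s a (prodw w).
Proof. by move: (phiA_tele a 1%g w); rewrite s_1 mul1r mulg1 mul1g. Qed.

Lemma phi_key pre (a b : gT) post :
  phi s (pre ++ a :: b :: post) * s b (b^-1 * a * b)%g =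
  phi s (pre ++ b :: (b^-1 * a * b)%g :: post) * s a b.
Proof.
rewrite /phi !phiA_cat /=.
set p := (1 * prodw pre)%g; set y := (b^-1 * a * b)%g.
have Hpy : (p * b * y = p * a * b)%g by rewrite -!mulgA bya.
rewrite Hpy.
have E1 : s p a * s (p * a)%g b = s a b * s p (a * b)%g by rewrite s_co.
have E2 : s p b * s (p * b)%g y = s b y * s p (b * y)%g by rewrite s_co.
rewrite /y bya in E2.
rewrite -/y.
transitivity (phiA s 1 pre * (s p a * s (p * a)%g b) * phiA s (p * a * b) post * s b y).
  by ring.
rewrite E1.
transitivity (phiA s 1 pre * (s p b * s (p * b)%g y) * phiA s (p * a * b) post * s a b).
  by rewrite E2 /y; ring.
by ring.
Qed.


Variable q q' : gT -> gT -> k.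
Hypothesis Htw : forall x y, x \in X -> y \in X -> q' x y = s x y * q x y / s (rtr x y) x.

Definition Dp f := fun w => phi s w * f w.

Lemma sigma_twist i f : suppX f -> forall u,
  phi s u * sigma q' i f u = sigma q i (Dp f) u.
Proof.
move=> Hf u; case: (ltnP i.+1 (size u)) => H; last by rewrite !sigma_out -?leqNgt.
have [pre [a [b [post [Hsz ->]]]]] := split2 H.
rewrite !sigmaE // /Dp.
set y := (b^-1 * a * b)%g.
set u' := pre ++ b :: y :: post.
have [->|nz] := eqVneq (f u') 0; first by rewrite !mulr0.
move: (Hf _ nz); rewrite /inX all_cat /= => /andP [_ /and3P [Hb Hy _]].
rewrite Htw // rtr_bya.
have K := phi_key pre a b post; rewrite -/y -/u' in K.
have K' : phi s (pre ++ a :: b :: post) = phi s u' * s a b / s b y.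
  by rewrite -K mulfK // s_nz.
rewrite K'.
have := s_nz b y; have := s_nz a b; move=> h1 h2.
by field; rewrite h1 h2.
Qed.

Definition fold q0 m (t : seq 'I_m) f :=
  foldr (fun j g => sigma q0 (nat_of_ord j) g) f t.

Lemma fold_ext q0 m (t : seq 'I_m) f g : f =1 g -> fold q0 t f =1 fold q0 t g.
Proof. by elim: t => //= j t IH H; apply: sigma_ext; apply: IH. Qed.

Lemma fold_supp q0 m (t : seq 'I_m) f : suppX f -> suppX (fold q0 t f).
Proof. by elim: t => //= j t IH H; apply: sigma_supp; apply: IH. Qed.

Lemma fold_mulG q0 m (t : seq 'I_m) f (F : gT -> k) u :
  fold q0 t (fun w => F (prodw w) * f w) u = F (prodw u) * fold q0 t f u.
Proof.
elim: t u => //= j t IH u; rewrite -sigma_mulG; apply: sigma_ext => w; exact: IH.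
Qed.

Lemma fold_twist m (t : seq 'I_m) f : suppX f -> forall u,
  phi s u * fold q' t f u = fold q t (Dp f) u.
Proof.
move=> Hf; elim: t => //= j t IH u.
rewrite sigma_twist; last exact: fold_supp.
apply: sigma_ext => w; exact: IH.
Qed.

Lemma rhoM_fold q0 n (w : 'S_n) f : exists t : seq 'I_n.-1,
   forall q1 g, rhoM q1 w g = fold q1 t g.
Proof.
rewrite /rhoM; case: [pick _ | _] => [t|]; first by exists t.
by exists [::].
Qed.

Lemma Qn_twist n f : suppX f -> forall u, phi s u * Qn q' n f u = Qn q n (Dp f) u.
Proof.
move=> Hf u; rewrite /Qn mulr_sumr; apply: eq_bigr => w _.
have [t Ht] := rhoM_fold q w f.
by rewrite !Ht fold_twist.
Qed.

Lemma Qn_mulG q0 n f (F : gT -> k) u :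
  Qn q0 n (fun w => F (prodw w) * f w) u = F (prodw u) * Qn q0 n f u.
Proof.
rewrite /Qn mulr_sumr; apply: eq_bigr => w _.
have [t Ht] := rhoM_fold q0 w f.
by rewrite !Ht fold_mulG.
Qed.

Lemma Qn_ext q0 n f g : f =1 g -> Qn q0 n f =1 Qn q0 n g.
Proof.
move=> H u; rewrite /Qn; apply: eq_bigr => w _.
have [t Ht] := rhoM_fold q0 w f.
by rewrite !Ht; apply: fold_ext.
Qed.



Lemma ideal_sum d (r : seq gT) (F : gT -> seq gT -> k) :
  (forall h, ideal_d X q' d (F h)) -> ideal_d X q' d (fun w => \sum_(h <- r) F h w).
Proof.
move=> H; elim: r => [|h r IH].
  by apply: idl_ext (idl_zero _ _ _) _ => w; rewrite big_nil.
by apply: idl_ext (idl_add (H h) IH) _ => w; rewrite big_cons.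
Qed.

Lemma transfer d g : ideal_d X q d g -> ideal_d X q' d (fun w => g w / phi s w).
Proof.
elim => {g}.
- by apply: idl_ext (idl_zero _ _ _) _ => w; rewrite mul0r.
- move=> f g _ IH1 _ IH2; apply: idl_ext (idl_add IH1 IH2) _ => w; by rewrite mulrDl.
- move=> f g _ IH H; apply: idl_ext IH _ => w; by rewrite H.
- move=> u m g v Hm Hu Hv Hg HQ.
  pose gh h := fun z => (if prodw z == h then 1 else 0) * g z.
  have Edec : forall w, tens u m g v w = \sum_(h : gT) tens u m (gh h) v w.
    move=> w; rewrite /tens; case: ifP => _; last by rewrite big1.
    rewrite (bigD1 (prodw (take m (drop (size u) w)))) //= /gh eqxx mul1r big1 ?addr0 // => h.
    by rewrite eq_sym => /negbTE ->; rewrite mul0r.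
  apply: idl_ext (ideal_sum (index_enum gT)
                   (F := fun h w => tens u m (gh h) v w / phi s w) _) _; last first.
    by move=> w; rewrite Edec mulr_suml.
  move=> h.
  pose C := phi s u * s (prodw u) h * phiA s (prodw u * h) v.
  have Cnz : C != 0 by rewrite !mulf_neq0 ?phi_nz ?phiA_nz ?s_nz.
  pose g2 := fun z => C^-1 * (gh h z / phi s z).
  have Hg2 : homog X m g2.
    move=> z Hz; apply: Hg; apply: contraNneq Hz; rewrite /g2 /gh => ->.
    by rewrite !mulr0 mul0r mulr0.
  have Sg2 : suppX g2 by move=> z /Hg2 /andP [].
  apply: idl_ext (idl_gen (g := g2) Hm Hu Hv Hg2 _) _.
  + move=> w; have: phi s w * Qn q' m g2 w = 0.
      rewrite Qn_twist //.
      rewrite (@Qn_ext q m _ (fun z => (fun h' => C^-1 * (if h' == h then 1 else 0)) (prodw z) * g z)).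
        by rewrite (Qn_mulG q m g (fun h' => C^-1 * (if h' == h then 1 else 0))) HQ mulr0.
      move=> z; rewrite /Dp /g2 /gh.
      have := phi_nz z => hz.
      by case: (_ == h); field; rewrite ?hz ?Cnz.
    by move/eqP; rewrite mulf_eq0 (negbTE (phi_nz w)) /= => /eqP.
  + move=> w; rewrite /tens; case: ifP => [/and3P [/eqP Hsz /eqP Ht /eqP Hd]|_]; last by rewrite mul0r.
    set mid := take m (drop (size u) w).
    have Ew : w = u ++ mid ++ v.
      rewrite -{1}(cat_take_drop (size u) w) -{1}(cat_take_drop m (drop (size u) w)).
      by rewrite drop_drop addnC Hd Ht.
    rewrite /g2 /gh; case: eqP => Hh; last by rewrite !mul0r mulr0.
    have Ephi : phi s w = C * phi s mid.
      rewrite Ew {1}/phi !phiA_cat mul1g (phiA_phi (prodw u) mid) Hh /C /phi.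
      by ring.
    rewrite Ephi.
    have := phi_nz mid => hz.
    by field; rewrite hz Cnz.
Qed.

End Twist.

Section Final.
Import GRing.Theory.
Local Open Scope ring_scope.

Lemma inv_cocycle (gT : finGroupType) (k : fieldType) (s : gT -> gT -> k) :
  group_2cocycle s -> group_2cocycle (fun x y => (s x y)^-1).
Proof.
case=> Hnz Hc H1; split.
- by move=> x y; rewrite invr_eq0.
- by move=> x y z; rewrite -!invfM Hc.
- by move=> x; have [-> ->] := H1 x; rewrite invr1.
Qed.

Lemma phiA_inv (gT : finGroupType) (k : fieldType) (s : gT -> gT -> k) a w :
  phiA (fun x y => (s x y)^-1) a w = (phiA s a w)^-1.
Proof. by elim: w a => [|x w IH] a /=; rewrite ?invr1 // IH invfM. Qed.

Lemma dir (gT : finGroupType) (k : fieldType) (X : {set gT}) (q q' : gT -> gT -> k)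
  (s : gT -> gT -> k) d :
  (forall b y, y \in X -> rtr b y \in X) -> group_2cocycle s ->
  (forall x y, x \in X -> y \in X -> q' x y = s x y * q x y / s (rtr x y) x) ->
  nichols_dgen X q d -> nichols_dgen X q' d.
Proof.
move=> HX Hs Htw HN n f Hf.
have HDf : homog X n (Dp s f).
  move=> w; rewrite /Dp => Hw; apply: Hf; apply: contraNneq Hw => ->; by rewrite mulr0.
have Sf : suppX X f by move=> w /Hf /andP [].
have pnz := phi_nz Hs.
have EJ : J_comp q' n f <-> J_comp q n (Dp s f).
  rewrite /J_comp; case: ifP => _; split => H w.
  - by rewrite /Dp H mulr0.
  - by move: (H w); rewrite /Dp => /eqP; rewrite mulf_eq0 (negbTE (pnz w)) /= => /eqP.
  - by rewrite -(Qn_twist HX Hs Htw) // H mulr0.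
  - by move/eqP: (H w); rewrite -(Qn_twist HX Hs Htw) // mulf_eq0 (negbTE (pnz w)) /= => /eqP.
rewrite EJ (HN n _ HDf); split.
- move/(transfer HX Hs Htw) => H; apply: idl_ext H _ => w.
  by rewrite /Dp mulrC mulKf.
- have Hs' := inv_cocycle Hs.
  have Htw' : forall x y, x \in X -> y \in X ->
      q x y = (s x y)^-1 * q' x y / (s (rtr x y) x)^-1.
    move=> x y Hx Hy; rewrite Htw //.
    have := s_nz Hs x y; have := s_nz Hs (rtr x y) x => h1 h2.
    by field; rewrite h1 h2 oner_neq0.
  move/(transfer HX Hs' Htw') => H; apply: idl_ext H _ => w.
  by rewrite /phi phiA_inv invrK mulrC.
Qed.

End Final.

Theorem mainTheorem15 (gT : finGroupType) (k : fieldType) (X : {set gT})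
  (q q' : gT -> gT -> k) (d : nat) :
  X \in classes [set: gT] ->
  YD_cocycle X q ->
  rack_cocycle X q' ->
  twist_equiv X q q' ->
  (2 <= d)%N ->
  (nichols_dgen X q d <-> nichols_dgen X q' d).
Proof.
move=> HXc _ _ [s [Hs Htw]] _.
have HX : forall b y, y \in X -> rtr b y \in X.
  case/imsetP: HXc => x _ -> b y /imsetP [g _ ->].
  have -> : rtr b (x ^ g)%g = (x ^ (g * b^-1))%g.
    rewrite conjgM /rtr. set z := (x ^ g)%g. by rewrite conjgE invgK -mulgA.
  by apply/imsetP; exists (g * b^-1)%g; rewrite ?inE.
have Hs' := inv_cocycle Hs.
have Htw' : forall x y, x \in X -> y \in X ->
    (q x y = (s x y)^-1 * q' x y / (s (rtr x y) x)^-1)%R.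
  move=> x y Hx Hy; rewrite Htw //.
  have := s_nz Hs x y; have := s_nz Hs (rtr x y) x => h1 h2.
  by field; rewrite h1 h2 GRing.oner_neq0.
split; [exact: dir HX Hs Htw | exact: dir HX Hs' Htw'].
Qed.
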